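(* Let $0<\alpha\le\beta$ with $\alpha\le1$, and let $\gamma:[0,1]\to\mathbb{R}^n$ be an $(\alpha,\beta)$-bi-Hölder curve with constant $1\le C_\gamma<\infty$. Then there exist $C=C(\beta,C_\gamma)>0$ and $r_0=r_0(\beta,C_\gamma)>0$ such that for all $0<r<r_0$, $$\Lambda(B(\widehat\gamma,r),r)\ge C\, r^{\frac{\beta-1}{\beta}}.$$
   Context: A map $\gamma:[0,1]\to\mathbb{R}^n$ is an $(\alpha,\beta)$-bi-Hölder curve with constant $C_\gamma\ge1$ if $\frac1{C_\gamma}|x-y|^\beta\le|\gamma(x)-\gamma(y)|\le C_\gamma|x-y|^\alpha$ for all $x,y\in[0,1]$. $\widehat\gamma:=\gamma([0,1])$. For $A\subset\mathbb{R}^n$, $B(A,r):=\{x:\mathrm{dist}(x,A)\le r\}$. A rectifiable curve is the image of a Lipschitz map $[0,1]\to\mathbb{R}^n$. $\Lambda(E,r):=\inf\{\mathcal{H}^1(\Gamma):\Gamma \text{ a rectifiable curve with } B(\Gamma,r)\supset E\}$. *)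

(* Defs.v *)
From HB Require Import structures.
From mathcomp Require Import all_boot all_order all_algebra.
From mathcomp Require Import all_classical all_reals all_analysis.
Set Implicit Arguments. Unset Strict Implicit. Unset Printing Implicit Defensive.
Import Order.TTheory GRing.Theory Num.Theory.
Local Open Scope classical_set_scope.
Local Open Scope ring_scope.

Section Defs.
Variables (R : realType) (n : nat).
Notation V := 'rV[R]_n.

Definition edist (x y : V) : R := Num.sqrt (\sum_(i < n) (x ord0 i - y ord0 i) ^+ 2).

Definition I01 : set R := [set t | 0 <= t <= 1].

Definition biHolder (alpha beta Cg : R) (g : R -> V) : Prop :=
  forall x y, I01 x -> I01 y ->
    Cg^-1 * (`|x - y| `^ beta) <= edist (g x) (g y) /\
    edist (g x) (g y) <= Cg * (`|x - y| `^ alpha).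

Definition distS (x : V) (A : set V) : R := inf [set edist x a | a in A].

Definition Bnbhd (A : set V) (r : R) : set V := [set x | distS x A <= r].

(* extended-valued diameter (0 for the empty set, +oo if unbounded) *)
Definition ediam (U : set V) : \bar R :=
  ereal_sup ([set 0%E] `|` [set (edist x y)%:E | x in U & y in U]).

Definition H1delta (delta : R) (E : set V) : \bar R :=
  ereal_inf [set (\sum_(0 <= i <oo) ediam (U i))%E | U in
     [set U : nat -> set V | E `<=` \bigcup_i U i /\ forall i, (ediam (U i) <= delta%:E)%E]].

Definition H1 (E : set V) : \bar R :=
  ereal_sup [set H1delta delta E | delta in [set d : R | 0 < d]].

Definition rectifiable_curve (G : set V) : Prop :=
  exists (f : R -> V) (L : R),
    (forall x y, I01 x -> I01 y -> edist (f x) (f y) <= L * `|x - y|) /\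
    G = f @` I01.

Definition Lambda (E : set V) (r : R) : \bar R :=
  ereal_inf [set H1 G | G in [set G | rectifiable_curve G /\ E `<=` Bnbhd G r]].

End Defs.

(* Main.v *)
Require Import Defs.
From HB Require Import structures.
From mathcomp Require Import all_boot all_order all_algebra.
From mathcomp Require Import all_classical all_reals all_analysis.
From mathcomp Require Import ring lra.
Import Order.TTheory GRing.Theory Num.Theory.
Local Open Scope classical_set_scope.
Local Open Scope ring_scope.
Import numFieldNormedType.Exports.
Set Implicit Arguments. Unset Strict Implicit. Unset Printing Implicit Defensive.

Section Edist.
Variables (R : realType) (n : nat).
Notation V := 'rV[R]_n.

Lemma lagrange (a b : 'I_n -> R) :
  (\sum_i a i * b i) ^+ 2 <= (\sum_i a i ^+ 2) * (\sum_i b i ^+ 2).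
Proof.
have H : \sum_i \sum_j (a i * b j - a j * b i) ^+ 2 =
  2%:R * ((\sum_i a i ^+ 2) * (\sum_i b i ^+ 2) - (\sum_i a i * b i) ^+ 2).
  have E : forall i j, (a i * b j - a j * b i) ^+ 2 =
     a i ^+ 2 * b j ^+ 2 + b i ^+ 2 * a j ^+ 2 - 2%:R * ((a i * b i) * (a j * b j)).
    by move=> i j; ring.
  under eq_bigr => i _ do under eq_bigr => j _ do rewrite E.
  under eq_bigr => i _ do rewrite sumrB big_split /= -!mulr_sumr.
  rewrite sumrB big_split /= -!mulr_sumr -!mulr_suml.
  ring.
have : 0 <= \sum_i \sum_j (a i * b j - a j * b i) ^+ 2.
  by apply: sumr_ge0 => i _; apply: sumr_ge0 => j _; exact: sqr_ge0.
rewrite H pmulr_rge0 ?ltr0n // subr_ge0 //.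
Qed.

Lemma edist_ge0 (x y : V) : 0 <= Defs.edist x y.
Proof. exact: sqrtr_ge0. Qed.

Lemma edist_xx (x : V) : Defs.edist x x = 0.
Proof.
rewrite /Defs.edist big1 ?sqrtr0 // => i _; by rewrite subrr expr0n.
Qed.

Lemma edist_sym (x y : V) : Defs.edist x y = Defs.edist y x.
Proof.
rewrite /Defs.edist; congr Num.sqrt; apply: eq_bigr => i _.
by rewrite -sqrrN opprB.
Qed.

Lemma sqrt_tri (a b : 'I_n -> R) :
  Num.sqrt (\sum_i (a i + b i) ^+ 2) <=
  Num.sqrt (\sum_i a i ^+ 2) + Num.sqrt (\sum_i b i ^+ 2).
Proof.
set A := \sum_i a i ^+ 2; set B := \sum_i b i ^+ 2.
have A0 : 0 <= A by apply: sumr_ge0 => i _; exact: sqr_ge0.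
have B0 : 0 <= B by apply: sumr_ge0 => i _; exact: sqr_ge0.
have S0 : 0 <= \sum_i (a i + b i) ^+ 2 by apply: sumr_ge0 => i _; exact: sqr_ge0.
rewrite -(@ler_pXn2r _ 2) ?nnegrE ?addr_ge0 ?sqrtr_ge0 //.
rewrite sqr_sqrtr // sqrrD !sqr_sqrtr //.
have -> : \sum_i (a i + b i) ^+ 2 = A + 2%:R * (\sum_i a i * b i) + B.
  rewrite /A /B.
  under eq_bigr => i _ do rewrite sqrrD.
  by rewrite !big_split /= mulr_natl mulr2n.
rewrite -mulr_natl lerD2r lerD2l -[X in _ <= X]mulr_natl mulr1 ler_pM2l ?ltr0n //.
apply: (le_trans (ler_norm _)).
rewrite -sqrtrM // -(sqrtr_sqr (\sum_i a i * b i)).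
by rewrite ler_sqrt ?lagrange // mulr_ge0.
Qed.

Lemma edist_tri (x y z : V) : Defs.edist x z <= Defs.edist x y + Defs.edist y z.
Proof.
rewrite /Defs.edist.
have -> : \sum_(i < n) (x ord0 i - z ord0 i) ^+ 2 =
  \sum_(i < n) ((x ord0 i - y ord0 i) + (y ord0 i - z ord0 i)) ^+ 2.
  by apply: eq_bigr => i _; congr (_ ^+ 2); ring.
exact: sqrt_tri.
Qed.

End Edist.
Section Cover.
Variable R : realType.

Lemma cover_len (r : R) (W : nat -> set R) (w : nat -> R) :
  0 <= r -> (forall j, 0 <= w j) ->
  [set x | 0 <= x <= r] `<=` \bigcup_j W j ->
  (forall j a b, W j a -> W j b -> a - b <= w j) ->
  ((r / 2)%:E <= \sum_(j <oo) (w j)%:E)%E.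
Proof.
move=> r0 w0 cov Ww.
have -> : (r / 2)%:E = ((2^-1)%:E * r%:E)%E by rewrite -EFinM mulrC.
rewrite lee_pdivrMl ?ltr0n // -nneseriesZl; last by move=> i _; rewrite lee_fin.
have E2 : forall j, (2%:E * (w j)%:E = ((w j) *+ 2)%:E)%E.
  by move=> j; rewrite -EFinM mulr_natl.
under eq_eseriesr => j _ do rewrite E2.
pose c j := xget 0 (W j).
pose I j : set R := `[c j - w j, c j + w j]%classic.
have WI : forall j, W j `<=` I j.
  move=> j a Wa; have cW : W j (c j) by apply: xgetPex; exists a.
  rewrite /I /= in_itv /=; have := Ww j _ _ Wa cW; have := Ww j _ _ cW Wa.
  by move=> h1 h2; apply/andP; split; lra.
have -> : r%:E = lebesgue_measure (`[0, r]%classic : set R).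
  rewrite lebesgue_measure_itv /= lte_fin.
  have [rp|rle] := ltP 0 r; first by rewrite oppr0 adde0.
  by have -> : r = 0 by lra.

apply: (le_trans (@measure_sigma_subadditive _ _ _ lebesgue_measure _ I _ _ _)).
- by move=> j; exact: measurable_itv.
- exact: measurable_itv.
- move=> x /= /[dup]; rewrite in_itv /= => /cov [j _ Wx] _.
  by exists j => //; apply: WI.
apply: lee_nneseries => j _; first by move=> _; exact: measure_ge0.
rewrite /I /= lebesgue_measure_itv /= lte_fin.
case: ifP => _; last by rewrite lee_fin mulrn_wge0.
rewrite -EFinD lee_fin; lra.
Qed.

End Cover.
Section Cont.
Variable R : realType.

Lemma lip_cont (h : R -> R) (K : R) :
  (forall x y, `|h x - h y| <= K * `|x - y|) -> continuous h.
Proof.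
move=> H x; apply/cvgrPdist_le => e e0.
apply/nbhs_ballP; exists (e / (`|K| + 1)) => /=.
  by rewrite divr_gt0 // ltr_wpDl.
move=> y; rewrite /ball /= => hy.
apply: (le_trans (H x y)).
rewrite ltr_pdivlMr ?ltr_wpDl // in hy.
have : K * `|x - y| <= `|x - y| * (`|K| + 1).
  have d0 : 0 <= `|x - y| by [].
  have : K * `|x - y| <= `|K| * `|x - y| by rewrite ler_wpM2r // ler_norm.
  rewrite mulrDr mulr1 mulrC; lra.
move=> h1; apply: ltW; exact: (le_lt_trans h1 hy).
Qed.

Lemma ivt_ab (h : R -> R) (K a b v : R) :
  (forall x y, `|h x - h y| <= K * `|x - y|) -> a <= b ->
  h a <= v <= h b \/ h b <= v <= h a ->
  exists2 c, a <= c <= b & h c = v.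
Proof.
move=> H ab hv.
have hc := @lip_cont h K H.
have side : Num.min (h a) (h b) <= v <= Num.max (h a) (h b).
  case: hv => /andP[h1 h2]; apply/andP; split.
  - by rewrite ge_min h1.
  - by rewrite le_max h2 orbT.
  - by rewrite ge_min h1 orbT.
  - by rewrite le_max h2.
have [c cab hcv] := @IVT R h a b v ab (continuous_subspaceT hc) side.
by exists c => //; move: cab; rewrite in_itv.
Qed.

Lemma ivt_lip (h : R -> R) (K a b v : R) :
  (forall x y, `|h x - h y| <= K * `|x - y|) ->
  h a <= v <= h b \/ h b <= v <= h a ->
  exists2 c, Num.min a b <= c <= Num.max a b & h c = v.
Proof.
move=> H hv; have [ab|ba] := leP a b.
  exact: (@ivt_ab h K a b v H ab hv).
apply: (@ivt_ab h K b a v H (ltW ba)); tauto.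
Qed.

End Cont.

Unset Implicit Arguments.
Section Main.
Variables (R : realType) (n : nat).
Notation V := 'rV[R]_n.
Notation ed := (@Defs.edist R n).

Lemma min_lip (u v r : R) : `|Num.min u r - Num.min v r| <= `|u - v|.
Proof.
have N1 : u - v <= `|u - v| by apply: ler_norm.
have N2 : v - u <= `|u - v| by rewrite distrC; apply: ler_norm.
rewrite ler_norml.
by have [hu|hu] := ltP u r; have [hv|hv] := ltP v r; apply/andP; split; lra.
Qed.

Lemma ed_lip (a b q : V) : `|ed a q - ed b q| <= ed a b.
Proof.
have t1 := edist_tri a b q; have t2 := edist_tri b a q.
rewrite (edist_sym b a) in t2.
rewrite ler_norml; apply/andP; split; lra.
Qed.

Definition cl (t : R) := Num.max 0 (Num.min t 1).

Lemma cl_I01 t : I01 (cl t).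
Proof. by rewrite /I01 /cl /= le_max lexx ge_max ler01 ge_min lexx orbT. Qed.

Lemma cl_id t : I01 t -> cl t = t.
Proof.
rewrite /I01 /cl /= => /andP[h1 h2].
have -> : Num.min t 1 = t by apply/min_idPl.
by apply/max_idPr.
Qed.

Lemma max_lip (u v r : R) : `|Num.max r u - Num.max r v| <= `|u - v|.
Proof.
have N1 : u - v <= `|u - v| by apply: ler_norm.
have N2 : v - u <= `|u - v| by rewrite distrC; apply: ler_norm.
rewrite ler_norml.
by have [hu|hu] := ltP r u; have [hv|hv] := ltP r v; apply/andP; split; lra.
Qed.

Lemma cl_lip x y : `|cl x - cl y| <= `|x - y|.
Proof. exact: le_trans (max_lip _ _ _) (min_lip _ _ _). Qed.

Lemma ediam_ge0 (U : set V) : (0 <= Defs.ediam U)%E.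
Proof. by apply: ereal_sup_ubound; left. Qed.

Lemma ediam_ub (U : set V) x y : U x -> U y -> ((ed x y)%:E <= Defs.ediam U)%E.
Proof. by move=> Ux Uy; apply: ereal_sup_ubound; right; exists x => //; exists y. Qed.

Lemma sum_atmost1 (N : nat) (P : nat -> Prop) (d : R) : 0 <= d ->
  (forall i k, (i < N)%N -> (k < N)%N -> P i -> P k -> i = k) ->
  \sum_(0 <= i < N) (if `[< P i >] then d else 0) <= d.
Proof.
move=> d0 uniqP.
case: (pselect (exists i, (i < N)%N /\ P i)) => [[i0 [hi0 Pi0]]|no].
  rewrite (bigD1_seq i0) /= ?mem_index_iota ?iota_uniq //.
  rewrite asboolT // big1_seq ?addr0 // => i /andP[ii0 iin].
  case: asboolP => // Pi; exfalso; move: ii0; rewrite (uniqP i i0) ?eqxx //.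
  by move: iin; rewrite mem_index_iota.
rewrite big1_seq // => i /andP[_ iin].
case: asboolP => // Pi; exfalso; apply: no; exists i; split => //.
by move: iin; rewrite mem_index_iota.
Qed.

Lemma H1_lb (f : R -> V) (L r : R) (N : nat) (p : nat -> V) :
  0 < r ->
  (forall x y, I01 x -> I01 y -> ed (f x) (f y) <= L * `|x - y|) ->
  (forall i, (i < N)%N -> exists2 t, I01 t & f t = p i) ->
  (forall i k, (i < N)%N -> (k < N)%N -> i != k -> 4 * r <= ed (p i) (p k)) ->
  (1 < N)%N ->
  (((r / 2) *+ N)%:E <= Defs.H1 (f @` @I01 R))%E.
Proof.
move=> r0 Lf pG psep N2.
set G := f @` @I01 R.
have : (Defs.H1delta r G <= Defs.H1 G)%E by apply: ereal_sup_ubound; exists r.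
apply: le_trans.
rewrite /Defs.H1delta; apply: le_ereal_inf_tmp => _ [U [cov dU] <-].
pose d j := fine (Defs.ediam (U j)).
have dE : forall j, (d j)%:E = Defs.ediam (U j).
  move=> j; apply: fineK; rewrite ge0_fin_numE ?ediam_ge0 //.
  exact: le_lt_trans (dU j) (ltry r).
have d0 : forall j, 0 <= d j by move=> j; rewrite -lee_fin dE ediam_ge0.
have dub : forall j x y, U j x -> U j y -> ed x y <= d j.
  by move=> j x y Ux Uy; rewrite -lee_fin dE; apply: ediam_ub.
have dr : forall j, d j <= r by move=> j; rewrite -lee_fin dE.
pose Phi i x := Num.min (ed x (p i)) r.
pose meet i j := exists x, U j x /\ ed x (p i) < r.
pose w i j := if `[< meet i j >] then d j else 0.
have w0 : forall i j, 0 <= w i j by move=> i j; rewrite /w; case: ifP.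
have key : forall i, (i < N)%N -> ((r/2)%:E <= \sum_(j <oo) (w i j)%:E)%E.
  move=> i iN.
  apply: (@cover_len _ r (fun j => Phi i @` (U j `&` G))).
  - exact: ltW r0.
  - exact: w0.
  - move=> c /andP[c0 cr].
    pose k := if i == 0%N then 1%N else 0%N.
    have kN : (k < N)%N by rewrite /k; case: ifP => _ //; apply: leq_trans N2.
    have ki : k != i by rewrite /k; case: ifP => [/eqP -> //|/negbT]; rewrite eq_sym.
    have [a Ia fa] := pG i iN.
    have [b Ib fb] := pG k kN.
    pose h t := Phi i (f (cl t)).
    have hlip : forall x y, `|h x - h y| <= `|L| * `|x - y|.
      move=> x y; apply: (le_trans (min_lip _ _ _)).
      apply: (le_trans (ed_lip _ _ _)).
      apply: (le_trans (Lf _ _ (cl_I01 x) (cl_I01 y))).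
      apply: (le_trans (ler_wpM2r (normr_ge0 _) (ler_norm L))).
      by apply: ler_wpM2l => //; apply: cl_lip.
    have ha : h a = 0.
      by rewrite /h /Phi cl_id // fa edist_xx; apply/min_idPl; apply: ltW.
    have hb : h b = r.
      rewrite /h /Phi cl_id // fb; apply/min_idPr.
      have := psep k i kN iN ki; lra.
    have hc : h a <= c <= h b by rewrite ha hb c0 cr.
    have [t _ ht] := @ivt_lip _ h `|L| a b c hlip (or_introl hc).
    have Gt : G (f (cl t)) by exists (cl t) => //; apply: cl_I01.
    have [j _ Uj] := cov _ Gt.
    by exists j => //; exists (f (cl t)).
  - move=> j _ _ [x [Ux Gx] <-] [y [Uy Gy] <-].
    rewrite /w; case: asboolP => [m|nm].
      apply: (le_trans (ler_norm _)); apply: (le_trans (min_lip _ _ _)).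
      by apply: (le_trans (ed_lip _ _ _)); apply: dub.
    have fx : forall z, U j z -> Phi i z = r.
      move=> z Uz; apply/min_idPr; rewrite leNgt; apply/negP => hz.
      by apply: nm; exists z.
    by rewrite fx // fx // subrr.
have sumw : forall j, (\sum_(0 <= i < N) (w i j)%:E <= (d j)%:E)%E.
  move=> j; rewrite sumEFin lee_fin; apply: sum_atmost1 => //.
  move=> i k iN kN [x [Ux hx]] [y [Uy hy]].
  apply/eqP; apply: contraT => ik; have := psep i k iN kN ik.
  have t1 := edist_tri (p i) x (p k).
  have t2 := edist_tri x y (p k).
  have := dub j x y Ux Uy; have := dr j.
  rewrite (edist_sym (p i) x) in t1; lra.
have -> : ((r / 2) *+ N)%:E = (\sum_(0 <= i < N) (r / 2)%:E)%E.
  by rewrite sumEFin sumr_const_nat subn0.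
apply: (@le_trans _ _ (\sum_(0 <= i < N) \sum_(j <oo) (w i j)%:E)%E).
  rewrite !big_seq; apply: lee_sum => i; rewrite mem_index_iota => /andP[_ iN].
  exact: key.
rewrite -nneseries_sum_nat; last by move=> i j; rewrite lee_fin.
under [X in (_ <= X)%E]eq_eseriesr => j _ do rewrite -dE.
apply: lee_nneseries => j _ //.
by move=> _; apply: sume_ge0 => i _; rewrite lee_fin.
Qed.

End Main.

Theorem lemma3p9 (R : realType) (beta Cg : R) :
  0 < beta -> 1 <= Cg ->
  exists C r0 : R, 0 < C /\ 0 < r0 /\
    forall (n : nat) (alpha : R) (g : R -> 'rV[R]_n),
      0 < alpha -> alpha <= beta -> alpha <= 1 ->
      biHolder alpha beta Cg g ->
      forall r : R, 0 < r -> r < r0 ->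
        ((C * r `^ ((beta - 1) / beta))%:E <= Lambda (Bnbhd (g @` @I01 R) r) r)%E.
Proof.
move=> b0 Cg1.
have Cg0 : 0 < Cg by lra.
set K := 8 * Cg.
have K0 : 0 < K by rewrite /K; lra.
exists (K `^ (- beta^-1) / 2), K^-1; split.
  by rewrite divr_gt0 // powR_gt0.
split; first by rewrite invr_gt0.
move=> n alpha g a0 ab a1 bh r r0 rK.
have Kr1 : K * r < 1.
  by move: rK; rewrite -(ltr_pM2l K0) mulfV ?gt_eqF.
have Kr0 : 0 < K * r by rewrite mulr_gt0.
set d := (K * r) `^ beta^-1.
have d0 : 0 < d by rewrite powR_gt0.
have db : d `^ beta = K * r.
  by rewrite /d -powRrM mulVf ?gt_eqF // powRr1 // ltW.
have d1 : d < 1.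
  rewrite ltNge; apply/negP => h.
  have := @ge0_ler_powR R beta (ltW b0) 1 d; rewrite !nnegrE ler01 (ltW d0).
  by move=> /(_ isT isT h); rewrite powR1 db; lra.
set M := Num.truncn d^-1.
have [hM1 hM2] : M%:R <= d^-1 /\ d^-1 < M.+1%:R.
  have hd : 0 <= d^-1 by rewrite invr_ge0 ltW.
  by have /andP[] := Num.Theory.truncn_itv hd; split.
have di1 : 1 < d^-1 by rewrite invf_gt1.
have M1 : (1 <= M)%N.
  have : 1 < M.+1%:R :> R by lra.
  by rewrite ltr1n.
have Mpos : 0 < M%:R :> R by rewrite ltr0n.
pose t (i : nat) : R := i%:R / M%:R.
have tI : forall i, (i < M.+1)%N -> I01 (t i).
  move=> i; rewrite ltnS => iM; rewrite /I01 /t /= divr_ge0 ?ler0n //=.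
  by rewrite ler_pdivrMr // mul1r ler_nat.
have dM : d <= M%:R^-1.
  by rewrite -[d]invrK lef_pV2 ?posrE ?invr_gt0.
have tsep : forall i k, i != k -> d <= `|t i - t k|.
  move=> i k ik.
  have h1 : 1 <= `|i%:R - k%:R : R|.
    case: (ltngtP i k) => [ik'|ki'|ie]; last by rewrite ie eqxx in ik.
      rewrite distrC -natrB; last exact: ltnW.
      by rewrite normr_nat ler1n subn_gt0.
    rewrite -natrB; last exact: ltnW.
    by rewrite normr_nat ler1n subn_gt0.
  rewrite /t -mulrBl normrM normfV (gtr0_norm Mpos).
  apply: (le_trans dM); rewrite -[X in X <= _]mul1r.
  by rewrite ler_wpM2r // invr_ge0 ltW.
have gsep : forall i k, (i < M.+1)%N -> (k < M.+1)%N -> i != k ->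
    8 * r <= Defs.edist (g (t i)) (g (t k)).
  move=> i k iM kM ik.
  have [h _] := bh _ _ (tI i iM) (tI k kM).
  apply: le_trans h.
  have -> : 8 * r = Cg^-1 * (K * r) by rewrite /K; field; rewrite gt_eqF.
  rewrite ler_wpM2l ?invr_ge0 ?(ltW Cg0) // -db.
  have := @ge0_ler_powR R beta (ltW b0) d `|t i - t k|.
  by rewrite !nnegrE (ltW d0) normr_ge0 => /(_ isT isT (tsep i k ik)).
rewrite /Lambda; apply: le_ereal_inf_tmp => _ [G [[f [L [Lf GE]]] sub] <-].
rewrite GE in sub *.
have near : forall i, (i < M.+1)%N -> exists a,
    (f @` @I01 R) a /\ Defs.edist (g (t i)) a < 2 * r.
  move=> i iM.
  have inB : Bnbhd (g @` @I01 R) r (g (t i)).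
    rewrite /Bnbhd /distS /=.
    apply: (@le_trans _ _ 0); last exact: ltW.
    apply: ge_inf.
      by exists 0 => _ [a _ <-]; apply: edist_ge0.
    by exists (g (t i)); [exists (t i); [exact: tI|] | apply: edist_xx].
  have := sub _ inB; rewrite /Bnbhd /distS /= => hd.
  have [y [a Ga <-] ya] : exists2 y,
      [set Defs.edist (g (t i)) a | a in f @` @I01 R] y & y < 2 * r.
    apply: inf_lt; last by lra.
    exists (Defs.edist (g (t i)) (f 0)); exists (f 0) => //.
    by exists 0 => //; rewrite /I01 /= lexx ler01.
  by exists a.
have [p hp] : {p : nat -> 'rV[R]_n & forall i, (i < M.+1)%N ->
    (f @` @I01 R) (p i) /\ Defs.edist (g (t i)) (p i) < 2 * r}.
  apply: (@choice _ _ (fun i a => (i < M.+1)%N ->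
    (f @` @I01 R) a /\ Defs.edist (g (t i)) a < 2 * r)) => i.
  case: (ltnP i M.+1) => iM.
    by have [a ha] := near i iM; exists a.
  by exists (f 0).
have pG : forall i, (i < M.+1)%N -> exists2 s, I01 s & f s = p i.
  by move=> i iM; have [[s Is fs] _] := hp i iM; exists s.
have psep : forall i k, (i < M.+1)%N -> (k < M.+1)%N -> i != k ->
    4 * r <= Defs.edist (p i) (p k).
  move=> i k iM kM ik.
  have := gsep i k iM kM ik.
  have [_ hi] := hp i iM; have [_ hk] := hp k kM.
  have t1 := edist_tri (g (t i)) (p i) (g (t k)).
  have t2 := edist_tri (p i) (p k) (g (t k)).
  rewrite (edist_sym (p k) (g (t k))) in t2.
  lra.
apply: le_trans (@H1_lb R n f L r M.+1 p r0 Lf pG psep _); last by [].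

rewrite lee_fin.
have -> : (beta - 1) / beta = 1 + - beta^-1 by field; rewrite gt_eqF.
rewrite powRD ?(gt_eqF r0) ?implybT // powRr1 ?(ltW r0) //.
rewrite -mulr_natr.
have E : K `^ (- beta^-1) * r `^ (- beta^-1) = d^-1.
  by rewrite /d -powRN powRM ?(ltW K0) ?(ltW r0).
have -> : forall u, K `^ (- beta^-1) / u * (r * r `^ (- beta^-1)) =
  r / u * (K `^ (- beta^-1) * r `^ (- beta^-1)) by move=> u; ring.
rewrite E.
by rewrite -[X in _ <= X]mulr_natr ler_wpM2l ?divr_ge0 ?(ltW r0) // ltW.
Qed.
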